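(* The geometric thickness of the complete bipartite graph $K_{6,6}$ is $\overline{\theta}(K_{6,6}) = 2$.
   Context: The geometric thickness $\overline{\theta}(G)$ of a graph $G$ is the smallest integer $k$ such that there is an injective placement of the vertices of $G$ at points of the plane, with each edge drawn as the straight line segment between the points of its endpoints and containing no other vertex point, together with an assignment of each edge to one of $k$ layers, such that no two edges assigned to the same layer cross (i.e., two edges in the same layer meet at most in a common endpoint). *)

(* Defs.v *)
From Stdlib Require Import Reals Lia.
Open Scope R_scope.

Definition point := (R * R)%type.

Definition on_seg (p a b : point) : Prop :=
  exists t : R, 0 <= t <= 1 /\
    fst p = fst a + t * (fst b - fst a) /\
    snd p = snd a + t * (snd b - snd a).

Record graph := Graph {
  nverts : nat;
  adj : nat -> nat -> Prop;
  adj_sym : forall u v, adj u v -> adj v u;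
  adj_irr : forall u, ~ adj u u;
  adj_range : forall u v, adj u v -> (u < nverts)%nat /\ (v < nverts)%nat
}.

Definition same_edge (u v x y : nat) : Prop :=
  (u = x /\ v = y) \/ (u = y /\ v = x).

Definition geom_k_layerable (G : graph) (k : nat) : Prop :=
  exists (pos : nat -> point) (layer : nat -> nat -> nat),
    (forall u v, (u < nverts G)%nat -> (v < nverts G)%nat -> pos u = pos v -> u = v) /\
    (forall u v w, adj G u v -> (w < nverts G)%nat -> w <> u -> w <> v ->
        ~ on_seg (pos w) (pos u) (pos v)) /\
    (forall u v, adj G u v -> (layer u v < k)%nat /\ layer u v = layer v u) /\
    (forall u v x y, adj G u v -> adj G x y -> ~ same_edge u v x y ->
        layer u v = layer x y ->
        forall p, on_seg p (pos u) (pos v) -> on_seg p (pos x) (pos y) ->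
          exists w, (w = u \/ w = v) /\ (w = x \/ w = y) /\ p = pos w).

Definition geometric_thickness_is (G : graph) (k : nat) : Prop :=
  geom_k_layerable G k /\ forall k', geom_k_layerable G k' -> (k <= k')%nat.

Definition Kbip_adj (m n : nat) (u v : nat) : Prop :=
  ((u < m)%nat /\ (m <= v < m + n)%nat) \/ ((v < m)%nat /\ (m <= u < m + n)%nat).

Lemma Kbip_sym m n u v : Kbip_adj m n u v -> Kbip_adj m n v u.
Proof. unfold Kbip_adj; tauto. Qed.

Lemma Kbip_irr m n u : ~ Kbip_adj m n u u.
Proof. unfold Kbip_adj; lia. Qed.

Lemma Kbip_range m n u v : Kbip_adj m n u v -> (u < m + n)%nat /\ (v < m + n)%nat.
Proof. unfold Kbip_adj; lia. Qed.

Definition K_bip (m n : nat) : graph :=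
  Graph (m + n) (Kbip_adj m n) (@Kbip_sym m n) (@Kbip_irr m n) (@Kbip_range m n).

(* Main.v *)
Require Import Defs.
From Stdlib Require Import Reals.
From Stdlib Require Import Lra Lia Psatz ZArith List Bool.
Import ListNotations.
Open Scope R_scope.

Definition o (p q r : point) : R :=
  (fst q - fst p)*(snd r - snd p) - (snd q - snd p)*(fst r - fst p).
Definition lerp (x y : point) (t : R) : point :=
  (fst x + t*(fst y - fst x), snd x + t*(snd y - snd x)).

Lemma on_seg_lerp x y t : 0 <= t <= 1 -> on_seg (lerp x y t) x y.
Proof. intros H. exists t. simpl. auto. Qed.

Lemma on_seg_ex z x y : on_seg z x y -> exists t, 0 <= t <= 1 /\ z = lerp x y t.
Proof. intros [t [Ht [H1 H2]]]. exists t. split; auto. destruct z; simpl in *; subst; auto. Qed.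

Lemma o_lerp p q x y t : o p q (lerp x y t) = (1-t)*o p q x + t*o p q y.
Proof. unfold o, lerp; simpl; ring. Qed.

Lemma on_seg_o z p q : on_seg z p q -> o p q z = 0.
Proof. intros H. destruct (on_seg_ex _ _ _ H) as [t [_ ->]]. unfold o, lerp; simpl; ring. Qed.

Lemma on_seg_sym z p q : on_seg z p q -> on_seg z q p.
Proof. intros [t [Ht [H1 H2]]]. exists (1-t). split. lra. split; [rewrite H1|rewrite H2]; ring. Qed.

Lemma lerp_eq x y t z : z = lerp x y t <-> fst z = fst x + t*(fst y - fst x) /\ snd z = snd x + t*(snd y - snd x).
Proof. destruct z; unfold lerp; simpl; split; [intros H; inversion H; auto | intros [-> ->]; auto]. Qed.

Lemma ratio01 a b : a * b < 0 -> 0 <= a/(a-b) <= 1.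
Proof.
  intros H. assert (Hab : a - b <> 0) by nra.
  set (t := a/(a-b)). assert (E : t*(a-b) = a) by (unfold t; field; auto).
  destruct (Rlt_or_le a 0).
  - assert (b > 0) by nra. split; nra.
  - assert (a > 0) by nra. assert (b < 0) by nra. split; nra.
Qed.

Lemma PX p q r s : o p q r * o p q s < 0 -> o r s p * o r s q < 0 ->
  exists z, on_seg z p q /\ on_seg z r s.
Proof.
  intros H1 H2.
  assert (Hab : o p q r - o p q s <> 0) by nra.
  assert (Hcd : o r s p - o r s q <> 0) by nra.
  exists (lerp p q (o r s p/(o r s p - o r s q))). split.
  - apply on_seg_lerp. apply ratio01; auto.
  - exists (o p q r/(o p q r - o p q s)). split. apply ratio01; auto.
    destruct p as [p1 p2], q as [q1 q2], r as [r1 r2], s as [s1 s2].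
    unfold o, lerp in *; simpl in *. split; field; auto.
Qed.

Lemma ratio01' a b : a >= 0 -> b < 0 -> 0 <= a/(a-b) <= 1.
Proof.
  intros H1 H2. assert (Hab : a - b <> 0) by lra.
  set (t := a/(a-b)). assert (E : t*(a-b) = a) by (unfold t; field; auto).
  split; nra.
Qed.

Lemma o_cyc p q c : o p q c = o q c p.
Proof. unfold o; ring. Qed.

Lemma o_sum p q c z : o p q z + o q c z + o c p z = o p q c.
Proof. unfold o; ring. Qed.

Lemma SIDE p q c z : o p q c > 0 -> o q c z = 0 -> o p q z >= 0 -> o c p z >= 0 -> on_seg z q c.
Proof.
  intros HD H2 H1 H3.
  pose proof (o_sum p q c z) as Hs.
  exists (o p q z / o p q c).
  assert (E : o p q z / o p q c * o p q c = o p q z) by (field; lra).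
  split. split; nra.
  destruct p as [p1 p2], q as [q1 q2], c as [c1 c2], z as [z1 z2].
  unfold o in *; simpl in *.
  set (D := (q1 - p1) * (c2 - p2) - (q2 - p2) * (c1 - p1)) in *.
  set (h1 := (q1 - p1) * (z2 - p2) - (q2 - p2) * (z1 - p1)) in *.
  set (h2 := (c1 - q1) * (z2 - q2) - (c2 - q2) * (z1 - q1)) in *.
  assert (B1 : D*(z1-q1) = h1*(c1-q1) + h2*(p1-q1)) by (unfold D, h1, h2; ring).
  assert (B2 : D*(z2-q2) = h1*(c2-q2) + h2*(p2-q2)) by (unfold D, h1, h2; ring).
  rewrite H2 in B1, B2.
  split; apply (Rmult_eq_reg_l D); try lra; field_simplify; try lra.
Qed.

Lemma EXIT1 p q c x y : o p q c > 0 ->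
  o p q x >= 0 -> o q c x >= 0 -> o c p x >= 0 -> o q c y < 0 ->
  (o c p y >= 0 \/ o q c x / (o q c x - o q c y) <= o c p x / (o c p x - o c p y)) ->
  (o p q y >= 0 \/ o q c x / (o q c x - o q c y) <= o p q x / (o p q x - o p q y)) ->
  exists z, on_seg z x y /\ on_seg z q c.
Proof.
  intros HD H1 H2 H3 H2y C3 C1.
  set (t := o q c x / (o q c x - o q c y)) in *.
  assert (Ht : 0 <= t <= 1) by (apply ratio01'; auto).
  assert (Et : t * (o q c x - o q c y) = o q c x) by (unfold t; field; lra).
  exists (lerp x y t). split. apply on_seg_lerp; auto.
  apply (SIDE p q c); auto; rewrite o_lerp.
  - nra.
  - destruct C1 as [C1|C1]. nra.
    destruct (Rlt_or_le (o p q y) 0) as [Hy|Hy]; [|nra].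
    set (t1 := o p q x / (o p q x - o p q y)) in *.
    assert (Et1 : t1 * (o p q x - o p q y) = o p q x) by (unfold t1; field; lra).
    nra.
  - destruct C3 as [C3|C3]. nra.
    destruct (Rlt_or_le (o c p y) 0) as [Hy|Hy]; [|nra].
    set (t3 := o c p x / (o c p x - o c p y)) in *.
    assert (Et3 : t3 * (o c p x - o c p y) = o c p x) by (unfold t3; field; lra).
    nra.
Qed.

Lemma EXIT p q c x y : o p q c > 0 ->
  o p q x >= 0 -> o q c x >= 0 -> o c p x >= 0 -> o p q y >= 0 ->
  (o q c y < 0 \/ o c p y < 0) ->
  exists z, on_seg z x y /\ (on_seg z q c \/ on_seg z c p).
Proof.
  intros HD H1 H2 H3 H1y Hy.
  assert (HD' : o q c p > 0) by (rewrite <- o_cyc; auto).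
  destruct (Rlt_or_le (o q c y) 0) as [A|A]; destruct (Rlt_or_le (o c p y) 0) as [B|B].
  - destruct (Rle_or_lt (o q c x / (o q c x - o q c y)) (o c p x / (o c p x - o c p y))).
    + assert (Hz : exists z, on_seg z x y /\ on_seg z q c) by (apply (EXIT1 p q c); auto; lra).
      destruct Hz as [z [? ?]]; exists z; auto.
    + assert (Hz : exists z, on_seg z x y /\ on_seg z c p) by (apply (EXIT1 q c p); auto; lra).
      destruct Hz as [z [? ?]]; exists z; auto.
  - assert (Hz : exists z, on_seg z x y /\ on_seg z q c) by (apply (EXIT1 p q c); auto; lra).
    destruct Hz as [z [? ?]]; exists z; auto.
  - assert (Hz : exists z, on_seg z x y /\ on_seg z c p) by (apply (EXIT1 q c p); auto; lra).
    destruct Hz as [z [? ?]]; exists z; auto.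
  - lra.
Qed.

Lemma seg_sub w x y z : on_seg w x y -> on_seg z w y -> on_seg z x y.
Proof.
  intros H1 H2. destruct (on_seg_ex _ _ _ H1) as [s [Hs ->]].
  destruct (on_seg_ex _ _ _ H2) as [t [Ht ->]].
  exists (s + t*(1-s)). split. nra. unfold lerp; simpl; split; ring.
Qed.

Lemma CROSSLINE p q x y : o p q x < 0 -> o p q y > 0 -> exists w, on_seg w x y /\ o p q w = 0.
Proof.
  intros H1 H2. set (t := o p q x / (o p q x - o p q y)).
  exists (lerp x y t). split. apply on_seg_lerp. apply ratio01; nra.
  rewrite o_lerp. unfold t. field. lra.
Qed.

Lemma LINE p q r : p <> q -> o p q r = 0 -> exists t, r = lerp p q t.
Proof.
  intros Hpq H. destruct p as [p1 p2], q as [q1 q2], r as [r1 r2]. unfold o, lerp in *; simpl in *.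
  set (d := (q1-p1)*(q1-p1) + (q2-p2)*(q2-p2)).
  assert (Hd : d <> 0).
  { intro E. apply Hpq. unfold d in E.
    destruct (Req_dec q1 p1) as [e1|n1]; [|exfalso; assert (0 < (q1-p1)*(q1-p1)) by (apply Rsqr_pos_lt; intro; apply n1; lra); assert (0 <= (q2-p2)*(q2-p2)) by apply Rle_0_sqr; lra].
    destruct (Req_dec q2 p2) as [e2|n2]; [|exfalso; assert (0 < (q2-p2)*(q2-p2)) by (apply Rsqr_pos_lt; intro; apply n2; lra); assert (0 <= (q1-p1)*(q1-p1)) by apply Rle_0_sqr; lra].
    subst; auto. }
  exists (((r1-p1)*(q1-p1) + (r2-p2)*(q2-p2))/d).
  set (N := (r1-p1)*(q1-p1) + (r2-p2)*(q2-p2)).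
  assert (K1 : d*(r1-p1) = N*(q1-p1) - (q2-p2)*((q1 - p1) * (r2 - p2) - (q2 - p2) * (r1 - p1))) by (unfold d, N; ring).
  assert (K2 : d*(r2-p2) = N*(q2-p2) + (q1-p1)*((q1 - p1) * (r2 - p2) - (q2 - p2) * (r1 - p1))) by (unfold d, N; ring).
  rewrite H in K1, K2.
  f_equal.
  - apply (Rmult_eq_reg_l d); auto. field_simplify; auto. lra.
  - apply (Rmult_eq_reg_l d); auto. field_simplify; auto. lra.
Qed.

Lemma o_swap p q r : o p q r = - o p r q.
Proof. unfold o; ring. Qed.

Lemma o_lerp_base p q c s : o q c (lerp p q s) = (1-s) * o p q c /\ o c p (lerp p q s) = s * o p q c.
Proof. unfold o, lerp; simpl; split; ring. Qed.

Lemma o_neq p q c : o p q c <> 0 -> p <> q.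
Proof. intros H E; subst; apply H; unfold o; ring. Qed.

Lemma G9 p q c1 c3 w : o p q c1 > 0 -> o p q c3 > 0 -> o p q w = 0 ->
  (o q c1 w < 0 \/ o c1 p w < 0) -> (o q c3 w < 0 \/ o c3 p w < 0).
Proof.
  intros H1 H3 Hw H.
  assert (Hpq : p <> q) by (apply (o_neq p q c1); lra).
  destruct (LINE p q w Hpq Hw) as [s ->].
  destruct (o_lerp_base p q c1 s) as [E1 E2].
  destruct (o_lerp_base p q c3 s) as [E3 E4].
  rewrite E1, E2 in H. rewrite E3, E4.
  destruct H as [H|H]; [left|right]; nra.
Qed.

Lemma COLSAME p q b b' : o p q b * o p q b' > 0 -> o p b b' = 0 ->
  on_seg b' p b \/ on_seg b p b'.
Proof.
  intros H Hc.
  assert (Hpb : p <> b) by (intro E; subst; unfold o in H; nra).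
  destruct (LINE p b b' Hpb Hc) as [t ->].
  rewrite o_lerp in H.
  assert (E0 : o p q p = 0) by (unfold o; ring). rewrite E0 in H.
  assert (Ht : t > 0) by nra.
  destruct (Rle_or_lt t 1).
  - left. apply on_seg_lerp. lra.
  - right. exists (/t). split. split. left; apply Rinv_0_lt_compat; lra.
    rewrite <- Rinv_1. apply Rinv_le_contravar; lra.
    unfold lerp; simpl. split; field; lra.
Qed.

Definition LB_hyp (pos : nat -> point) : Prop :=
 (forall a a' b b', (a < 6)%nat -> (a' < 6)%nat -> (6 <= b < 12)%nat -> (6 <= b' < 12)%nat ->
    a <> a' -> b <> b' -> forall z, on_seg z (pos a) (pos b) -> on_seg z (pos a') (pos b') -> False) /\
 (forall a b b', (a < 6)%nat -> (6 <= b < 12)%nat -> (6 <= b' < 12)%nat -> b <> b' ->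
    ~ on_seg (pos b') (pos a) (pos b)) /\
 (forall a a' b, (a < 6)%nat -> (a' < 6)%nat -> (6 <= b < 12)%nat -> a <> a' ->
    ~ on_seg (pos a') (pos a) (pos b)).

Lemma NEST pos a1 a2 b b' : LB_hyp pos -> (a1 < 6)%nat -> (a2 < 6)%nat -> a1 <> a2 ->
  (6 <= b < 12)%nat -> (6 <= b' < 12)%nat -> b <> b' ->
  o (pos a1) (pos a2) (pos b) > 0 -> o (pos a1) (pos a2) (pos b') > 0 ->
  (o (pos a1) (pos b) (pos b') > 0 /\ o (pos a2) (pos b) (pos b') < 0) \/
  (o (pos a1) (pos b) (pos b') < 0 /\ o (pos a2) (pos b) (pos b') > 0).
Proof.
  intros [NX [NVB NVA]] r1 r2 r3 r4 r5 r6 D D'.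
  set (A1 := pos a1) in *. set (A2 := pos a2) in *. set (B := pos b) in *. set (B' := pos b') in *.
  assert (Ha : o A1 B B' <> 0).
  { intro E. destruct (COLSAME A1 A2 B B') as [H|H]; auto. nra.
    - apply (NVB a1 b b'); auto.
    - apply (NVB a1 b' b); auto. }
  assert (Hb : o A2 B B' <> 0).
  { intro E. destruct (COLSAME A2 A1 B B') as [H|H]; auto.
    assert (T1 : o A2 A1 B = - o A1 A2 B) by (unfold o; ring).
    assert (T2 : o A2 A1 B' = - o A1 A2 B') by (unfold o; ring).
    rewrite T1, T2. nra.
    - apply (NVB a2 b b'); auto.
    - apply (NVB a2 b' b); auto. }
  assert (S1 : o A1 B A2 = - o A1 A2 B) by (unfold o; ring).
  assert (S2 : o A2 B' A1 = o A1 A2 B') by (unfold o; ring).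
  assert (S3 : o A2 B' B = - o A2 B B') by (unfold o; ring).
  assert (S4 : o A1 B' A2 = - o A1 A2 B') by (unfold o; ring).
  assert (S5 : o A1 B' B = - o A1 B B') by (unfold o; ring).
  assert (S6 : o A2 B A1 = o A1 A2 B) by (unfold o; ring).
  destruct (Rtotal_order (o A1 B B') 0) as [h1|[h1|h1]]; [|contradiction|];
  destruct (Rtotal_order (o A2 B B') 0) as [h2|[h2|h2]]; try contradiction; auto.
  - exfalso. destruct (PX A1 B' A2 B) as [z [Z1 Z2]].
    + rewrite S4, S5. nra.
    + rewrite S6. nra.
    + eapply (NX a1 a2 b' b); eauto.
  - exfalso. destruct (PX A1 B A2 B') as [z [Z1 Z2]].
    + rewrite S1. nra.
    + rewrite S2, S3. nra.
    + eapply (NX a1 a2 b b'); eauto.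
Qed.

Lemma CORE pos a1 a2 a3 b1 b2 b3 : LB_hyp pos ->
  (a1 < 6)%nat -> (a2 < 6)%nat -> (a3 < 6)%nat -> a1 <> a2 -> a1 <> a3 -> a2 <> a3 ->
  (6 <= b1 < 12)%nat -> (6 <= b2 < 12)%nat -> (6 <= b3 < 12)%nat -> b1 <> b2 -> b1 <> b3 -> b2 <> b3 ->
  o (pos a1) (pos a2) (pos b1) > 0 -> o (pos a1) (pos a2) (pos b2) > 0 -> o (pos a1) (pos a2) (pos b3) > 0 ->
  o (pos a1) (pos b1) (pos b2) > 0 -> o (pos a2) (pos b1) (pos b2) < 0 ->
  o (pos a1) (pos b2) (pos b3) > 0 -> o (pos a2) (pos b2) (pos b3) < 0 -> False.
Proof.
  intros [NX [NVB NVA]] r1 r2 r3 n12 n13 n23 s1 s2 s3 m12 m13 m23 D1 D2 D3 al12 be12 al23 be23.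
  set (A1 := pos a1) in *. set (A2 := pos a2) in *. set (A3 := pos a3) in *.
  set (B1 := pos b1) in *. set (B2 := pos b2) in *. set (B3 := pos b3) in *.
  assert (C1 : o A2 B2 B1 = - o A2 B1 B2) by (unfold o; ring).
  assert (C2 : o B2 A1 B1 = o A1 B1 B2) by (unfold o; ring).
  assert (C3 : o A2 B3 B2 = - o A2 B2 B3) by (unfold o; ring).
  assert (C4 : o B3 A1 B2 = o A1 B2 B3) by (unfold o; ring).
  destruct (Rlt_or_le (o A1 A2 A3) 0) as [H3|H3].
  - destruct (CROSSLINE A1 A2 A3 B2 H3 D2) as [w [Hw Hw0]].
    destruct (Rlt_or_le (o A2 B1 w) 0) as [W1|W1];
    [ | destruct (Rlt_or_le (o B1 A1 w) 0) as [W2|W2] ].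
    3: { destruct (EXIT A1 A2 B1 w B2) as [z [Z1 [Z2|Z2]]]; try lra.
         - apply (NX a3 a2 b2 b1 r3 r2 s2 s1) with z; auto. apply (seg_sub w); auto.
         - apply (NX a3 a1 b2 b1 r3 r1 s2 s1) with z; auto. apply (seg_sub w); auto.
           apply on_seg_sym; auto. }
    all: assert (G : o A2 B3 w < 0 \/ o B3 A1 w < 0) by (apply (G9 A1 A2 B1 B3 w); auto);
      destruct (EXIT A1 A2 B3 B2 w) as [z [Z1 [Z2|Z2]]]; try lra;
      [ apply (NX a3 a2 b2 b3 r3 r2 s2 s3) with z; auto
      | apply (NX a3 a1 b2 b3 r3 r1 s2 s3) with z; auto; [|apply on_seg_sym; auto] ];
      apply (seg_sub w); auto; apply on_seg_sym; auto.
  - destruct (Rlt_or_le (o A2 B2 A3) 0) as [W1|W1];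
    [ | destruct (Rlt_or_le (o B2 A1 A3) 0) as [W2|W2] ].
    3: { destruct (EXIT A1 A2 B2 A3 B3) as [z [Z1 [Z2|Z2]]]; try lra.
         - apply (NX a3 a2 b3 b2 r3 r2 s3 s2) with z; auto.
         - apply (NX a3 a1 b3 b2 r3 r1 s3 s2) with z; auto. apply on_seg_sym; auto. }
    all: destruct (EXIT A1 A2 B2 B1 A3) as [z [Z1 [Z2|Z2]]]; try lra;
      [ apply (NX a3 a2 b1 b2 r3 r2 s1 s2) with z; auto
      | apply (NX a3 a1 b1 b2 r3 r1 s1 s2) with z; auto; apply on_seg_sym; auto ];
      apply on_seg_sym; auto.
Qed.

Lemma ML3 pos a1 a2 a3 b1 b2 b3 : LB_hyp pos ->
  (a1 < 6)%nat -> (a2 < 6)%nat -> (a3 < 6)%nat -> a1 <> a2 -> a1 <> a3 -> a2 <> a3 ->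
  (6 <= b1 < 12)%nat -> (6 <= b2 < 12)%nat -> (6 <= b3 < 12)%nat -> b1 <> b2 -> b1 <> b3 -> b2 <> b3 ->
  o (pos a1) (pos a2) (pos b1) > 0 -> o (pos a1) (pos a2) (pos b2) > 0 -> o (pos a1) (pos a2) (pos b3) > 0 ->
  False.
Proof.
  intros L r1 r2 r3 n12 n13 n23 s1 s2 s3 m12 m13 m23 D1 D2 D3.
  assert (SW : forall x y z, o x y z = - o x z y) by (intros; unfold o; ring).
  pose proof (SW (pos a1) (pos b1) (pos b2)). pose proof (SW (pos a1) (pos b1) (pos b3)).
  pose proof (SW (pos a1) (pos b2) (pos b3)). pose proof (SW (pos a2) (pos b1) (pos b2)).
  pose proof (SW (pos a2) (pos b1) (pos b3)). pose proof (SW (pos a2) (pos b2) (pos b3)).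
  destruct (NEST pos a1 a2 b1 b2) as [[P1 Q1]|[P1 Q1]]; auto;
  destruct (NEST pos a1 a2 b2 b3) as [[P2 Q2]|[P2 Q2]]; auto;
  destruct (NEST pos a1 a2 b1 b3) as [[P3 Q3]|[P3 Q3]]; auto.
  all: first
   [ apply (CORE pos a1 a2 a3 b1 b2 b3); (assumption || lia || lra)
   | apply (CORE pos a1 a2 a3 b1 b3 b2); (assumption || lia || lra)
   | apply (CORE pos a1 a2 a3 b2 b1 b3); (assumption || lia || lra)
   | apply (CORE pos a1 a2 a3 b2 b3 b1); (assumption || lia || lra)
   | apply (CORE pos a1 a2 a3 b3 b1 b2); (assumption || lia || lra)
   | apply (CORE pos a1 a2 a3 b3 b2 b1); (assumption || lia || lra) ].
Qed.

Lemma ON01 pos a1 a2 b : LB_hyp pos -> (a1 < 6)%nat -> (a2 < 6)%nat -> a1 <> a2 -> (6 <= b < 12)%nat ->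
  o (pos a1) (pos a2) (pos b) = 0 -> exists t, 0 <= t <= 1 /\ pos b = lerp (pos a1) (pos a2) t.
Proof.
  intros [NX [NVB NVA]] r1 r2 n s H.
  assert (Hne : pos a1 <> pos a2).
  { intro E. apply (NVA a2 a1 b); auto. rewrite E. exists 0. simpl. split. lra. split; ring. }
  destruct (LINE _ _ _ Hne H) as [t Et].
  destruct (Rlt_or_le t 0) as [T0|T0].
  - exfalso. apply (NVA a2 a1 b); auto. exists (/(1-t)). rewrite Et. split.
    + split. left; apply Rinv_0_lt_compat; lra. rewrite <- Rinv_1. apply Rinv_le_contravar; lra.
    + unfold lerp; simpl; split; field; lra.
  - destruct (Rle_or_lt t 1) as [T1|T1]. exists t; auto.
    exfalso. apply (NVA a1 a2 b); auto. exists (/t). rewrite Et. split.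
    + split. left; apply Rinv_0_lt_compat; lra. rewrite <- Rinv_1. apply Rinv_le_contravar; lra.
    + unfold lerp; simpl; split; field; lra.
Qed.

Lemma ZERO2 pos a1 a2 b b' : LB_hyp pos -> (a1 < 6)%nat -> (a2 < 6)%nat -> a1 <> a2 ->
  (6 <= b < 12)%nat -> (6 <= b' < 12)%nat -> b <> b' ->
  o (pos a1) (pos a2) (pos b) = 0 -> o (pos a1) (pos a2) (pos b') = 0 -> False.
Proof.
  intros L r1 r2 n s s' m H H'.
  destruct (ON01 pos a1 a2 b L r1 r2 n s H) as [t [Ht Et]].
  destruct (ON01 pos a1 a2 b' L r1 r2 n s' H') as [t' [Ht' Et']].
  destruct L as [NX [NVB NVA]].
  assert (K : forall tu tv (bu bv : nat), (6 <= bu < 12)%nat -> (6 <= bv < 12)%nat -> bu <> bv ->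
     0 <= tu <= 1 -> 0 <= tv <= 1 -> tu <= tv ->
     pos bu = lerp (pos a1) (pos a2) tu -> pos bv = lerp (pos a1) (pos a2) tv -> False).
  { intros tu tv bu bv su sv mu Hu Hv Huv Eu Ev.
    apply (NVB a1 bv bu); auto.
    destruct (Req_dec tv 0) as [Z|Z].
    - exists 0. rewrite Eu, Ev. split. lra. unfold lerp; simpl. replace tu with 0 by lra. split; ring.
    - exists (tu/tv). rewrite Eu, Ev. split.
      + split. apply Rmult_le_pos; [lra| left; apply Rinv_0_lt_compat; lra].
        apply (Rmult_le_reg_r tv); [lra|]. unfold Rdiv. rewrite Rmult_assoc, Rinv_l by lra. lra.
      + unfold lerp; simpl; split; field; lra. }
  destruct (Rle_or_lt t t').
  - apply (K t t' b b'); auto.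
  - apply (K t' t b' b); auto; lra.
Qed.

Definition triple_ok (f : nat -> R) (i j k : nat) : Prop :=
  ((6 <= i < 12) /\ (6 <= j < 12) /\ (6 <= k < 12) /\ i <> j /\ i <> k /\ j <> k)%nat /\
  ((f i > 0 /\ f j > 0 /\ f k > 0) \/ (f i < 0 /\ f j < 0 /\ f k < 0)).

Ltac try_triple f i j k := exists i, j, k; split; [ | first [left; repeat split; assumption | right; repeat split; assumption]]; repeat split; first [assumption | apply not_eq_sym; assumption | lia].

Lemma P5 (f : nat -> R) i1 i2 i3 i4 i5 :
  ((6 <= i1 < 12) /\ (6 <= i2 < 12) /\ (6 <= i3 < 12) /\ (6 <= i4 < 12) /\ (6 <= i5 < 12))%nat ->
  (i1 <> i2 /\ i1 <> i3 /\ i1 <> i4 /\ i1 <> i5 /\ i2 <> i3 /\ i2 <> i4 /\ i2 <> i5 /\ i3 <> i4 /\ i3 <> i5 /\ i4 <> i5)%nat ->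
  f i1 <> 0 -> f i2 <> 0 -> f i3 <> 0 -> f i4 <> 0 -> f i5 <> 0 ->
  exists i j k, triple_ok f i j k.
Proof.
  intros [R1 [R2 [R3 [R4 R5]]]] [D12 [D13 [D14 [D15 [D23 [D24 [D25 [D34 [D35 D45]]]]]]]]] n1 n2 n3 n4 n5. unfold triple_ok.
  destruct R1, R2, R3, R4, R5.
  destruct (Rtotal_order (f i1) 0) as [h1|[h1|h1]]; [|contradiction|];
  destruct (Rtotal_order (f i2) 0) as [h2|[h2|h2]]; try contradiction;
  destruct (Rtotal_order (f i3) 0) as [h3|[h3|h3]]; try contradiction;
  destruct (Rtotal_order (f i4) 0) as [h4|[h4|h4]]; try contradiction;
  destruct (Rtotal_order (f i5) 0) as [h5|[h5|h5]]; try contradiction;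
  first [ try_triple f i1 i2 i3 | try_triple f i1 i2 i4 | try_triple f i1 i2 i5
        | try_triple f i1 i3 i4 | try_triple f i1 i3 i5 | try_triple f i1 i4 i5
        | try_triple f i2 i3 i4 | try_triple f i2 i3 i5 | try_triple f i2 i4 i5
        | try_triple f i3 i4 i5 ].
Qed.

Lemma PIG (f : nat -> R) :
  (forall i j, (6 <= i < 12)%nat -> (6 <= j < 12)%nat -> i <> j -> f i = 0 -> f j = 0 -> False) ->
  exists i j k, triple_ok f i j k.
Proof.
  intros Z.
  assert (NZ : forall i j, (6 <= i < 12)%nat -> (6 <= j < 12)%nat -> i <> j -> f i = 0 -> f j <> 0)
    by (intros i j ? ? ? ? ?; eapply Z; eauto).
  destruct (Req_dec (f 6%nat) 0) as [E|E6].
  { apply (P5 f 7%nat 8%nat 9%nat 10%nat 11%nat); try (split; lia); apply (NZ 6%nat); auto; lia. }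
  destruct (Req_dec (f 7%nat) 0) as [E|E7].
  { apply (P5 f 6%nat 8%nat 9%nat 10%nat 11%nat); try (split; lia); auto; apply (NZ 7%nat); auto; lia. }
  destruct (Req_dec (f 8%nat) 0) as [E|E8].
  { apply (P5 f 6%nat 7%nat 9%nat 10%nat 11%nat); try (split; lia); auto; apply (NZ 8%nat); auto; lia. }
  destruct (Req_dec (f 9%nat) 0) as [E|E9].
  { apply (P5 f 6%nat 7%nat 8%nat 10%nat 11%nat); try (split; lia); auto; apply (NZ 9%nat); auto; lia. }
  destruct (Req_dec (f 10%nat) 0) as [E|E10].
  { apply (P5 f 6%nat 7%nat 8%nat 9%nat 11%nat); try (split; lia); auto; apply (NZ 10%nat); auto; lia. }
  apply (P5 f 6%nat 7%nat 8%nat 9%nat 10%nat); try (split; lia); auto.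
Qed.

Lemma LOWER1 : ~ geom_k_layerable (K_bip 6 6) 1.
Proof.
  intros [pos [layer [Inj [NV [LY CR]]]]]. simpl in *.
  assert (L : LB_hyp pos).
  { unfold Kbip_adj in *. split; [|split].
    - intros a a' b b' ra ra' rb rb' na nb z Z1 Z2.
      assert (e1 : (a < 6 /\ 6 <= b < 6 + 6 \/ b < 6 /\ 6 <= a < 6 + 6)%nat) by lia.
      assert (e2 : (a' < 6 /\ 6 <= b' < 6 + 6 \/ b' < 6 /\ 6 <= a' < 6 + 6)%nat) by lia.
      destruct (LY _ _ e1) as [l1 _]. destruct (LY _ _ e2) as [l2 _].
      destruct (CR a b a' b' e1 e2) with (p := z) as [w [W1 [W2 W3]]]; auto.
      + unfold same_edge; lia.
      + lia.
      + lia.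
    - intros a b b' ra rb rb' nb H.
      assert (e1 : (a < 6 /\ 6 <= b < 6 + 6 \/ b < 6 /\ 6 <= a < 6 + 6)%nat) by lia.
      apply (NV a b b' e1); auto; lia.
    - intros a a' b ra ra' rb na H.
      assert (e1 : (a < 6 /\ 6 <= b < 6 + 6 \/ b < 6 /\ 6 <= a < 6 + 6)%nat) by lia.
      apply (NV a b a' e1); auto; lia. }
  destruct (PIG (fun b => o (pos 0%nat) (pos 1%nat) (pos b))) as [i [j [k [[ri [rj [rk [nij [nik njk]]]]] S]]]].
  { intros i j ri rj nij Hi Hj. apply (ZERO2 pos 0 1 i j); auto; lia. }
  simpl in S. destruct S as [[S1 [S2 S3]]|[S1 [S2 S3]]].
  - apply (ML3 pos 0 1 2 i j k); auto; lia.
  - assert (SW : forall b, o (pos 1%nat) (pos 0%nat) (pos b) = - o (pos 0%nat) (pos 1%nat) (pos b))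
      by (intros; unfold o; ring).
    apply (ML3 pos 1 0 2 i j k); auto; try lia; rewrite SW; lra.
Qed.

Definition pxZ (n : nat) : Z :=
  match n with 0 => 54%Z | 1 => 367%Z | 2 => 501%Z | 3 => 374%Z | 4 => 56%Z | 5 => 89%Z
  | 6 => 200%Z | 7 => 0%Z | 8 => 247%Z | 9 => 18%Z | 10 => 781%Z | 11 => 326%Z | _ => 0%Z end.
Definition pyZ (n : nat) : Z :=
  match n with 0 => 309%Z | 1 => 736%Z | 2 => 772%Z | 3 => 640%Z | 4 => 231%Z | 5 => 348%Z
  | 6 => 446%Z | 7 => 987%Z | 8 => 511%Z | 9 => 918%Z | 10 => 425%Z | 11 => 615%Z | _ => 0%Z end.
Definition posU (n : nat) : point := (IZR (pxZ n), IZR (pyZ n)).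
Definition colL : list nat :=
  [0; 1; 0; 0; 1; 0; 1; 0; 1; 1; 0; 1; 1; 1; 1; 1; 0; 1; 1; 0; 1; 0; 0; 0; 0; 0; 0; 0; 0; 0; 1; 1; 0; 1; 1; 0]%nat.
Definition Lcol (a b : nat) : nat := (nth (a*6 + b) colL 0 mod 2)%nat.
Definition layerU (u v : nat) : nat := if (u <? 6)%nat then Lcol u (v-6) else Lcol v (u-6).

Definition oZ (u v w : nat) : Z :=
  ((pxZ v - pxZ u)*(pyZ w - pyZ u) - (pyZ v - pyZ u)*(pxZ w - pxZ u))%Z.

Lemma oZ_R u v w : o (posU u) (posU v) (posU w) = IZR (oZ u v w).
Proof. unfold o, posU, oZ; simpl. rewrite !minus_IZR, !mult_IZR, !minus_IZR. ring. Qed.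

Definition GPb : bool :=
  forallb (fun u => forallb (fun v => forallb (fun w =>
    (u =? v)%nat || (u =? w)%nat || (v =? w)%nat || negb (Z.eqb (oZ u v w) 0))
    (seq 0 12)) (seq 0 12)) (seq 0 12).
Definition sepZ (u v x y : nat) : bool := Z.ltb 0 (oZ u v x * oZ u v y).
Definition SEPb : bool :=
  forallb (fun a => forallb (fun x => forallb (fun b => forallb (fun y =>
    (a =? x)%nat || (b =? y)%nat || negb (Nat.eqb (Lcol a (b-6)) (Lcol x (y-6))) || sepZ a b x y || sepZ x y a b)
    (seq 6 6)) (seq 6 6)) (seq 0 6)) (seq 0 6).

Lemma GPb_true : GPb = true. Proof. vm_compute. reflexivity. Qed.
Lemma SEPb_true : SEPb = true. Proof. vm_compute. reflexivity. Qed.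

Lemma in_seq' a n k : (a <= k < a + n)%nat -> In k (seq a n).
Proof. intros. apply in_seq. lia. Qed.

Lemma GP u v w : (u < 12)%nat -> (v < 12)%nat -> (w < 12)%nat -> u <> v -> u <> w -> v <> w ->
  o (posU u) (posU v) (posU w) <> 0.
Proof.
  intros ru rv rw n1 n2 n3. rewrite oZ_R. intro E. apply eq_IZR in E.
  pose proof GPb_true as G. unfold GPb in G.
  rewrite forallb_forall in G. specialize (G u (in_seq' 0 12 u ltac:(lia))).
  rewrite forallb_forall in G. specialize (G v (in_seq' 0 12 v ltac:(lia))).
  rewrite forallb_forall in G. specialize (G w (in_seq' 0 12 w ltac:(lia))).
  rewrite E in G. simpl in G.
  apply Nat.eqb_neq in n1. apply Nat.eqb_neq in n2. apply Nat.eqb_neq in n3.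
  rewrite n1, n2, n3 in G. discriminate.
Qed.

Lemma SEP_ok a b x y : (a < 6)%nat -> (x < 6)%nat -> (6 <= b < 12)%nat -> (6 <= y < 12)%nat ->
  a <> x -> b <> y -> Lcol a (b-6) = Lcol x (y-6) ->
  o (posU a) (posU b) (posU x) * o (posU a) (posU b) (posU y) > 0 \/
  o (posU x) (posU y) (posU a) * o (posU x) (posU y) (posU b) > 0.
Proof.
  intros ra rx rb ry n1 n2 L. rewrite !oZ_R, <- !mult_IZR.
  pose proof SEPb_true as G. unfold SEPb in G.
  rewrite forallb_forall in G. specialize (G a (in_seq' 0 6 a ltac:(lia))).
  rewrite forallb_forall in G. specialize (G x (in_seq' 0 6 x ltac:(lia))).
  rewrite forallb_forall in G. specialize (G b (in_seq' 6 6 b ltac:(lia))).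
  rewrite forallb_forall in G. specialize (G y (in_seq' 6 6 y ltac:(lia))).
  apply Nat.eqb_neq in n1. apply Nat.eqb_neq in n2. rewrite n1, n2, L, Nat.eqb_refl in G. simpl in G.
  unfold sepZ in G. apply orb_true_iff in G. destruct G as [G|G]; apply Z.ltb_lt in G; apply IZR_lt in G; auto.
Qed.

Lemma SHARE A B Y p : o A B Y <> 0 -> on_seg p A B -> on_seg p A Y -> p = A.
Proof.
  intros H H1 H2. apply on_seg_o in H1.
  destruct (on_seg_ex _ _ _ H2) as [s [Hs ->]].
  rewrite o_lerp in H1. assert (E : o A B A = 0) by (unfold o; ring). rewrite E in H1.
  assert (H3 : s * o A B Y = 0) by (rewrite <- H1; ring).
  apply Rmult_integral in H3. destruct H3 as [H3|H3]; [|contradiction]. subst.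
  unfold lerp. destruct A; simpl. f_equal; ring.
Qed.

Lemma SEPL p q r s z : o p q r * o p q s > 0 -> on_seg z p q -> on_seg z r s -> False.
Proof.
  intros H H1 H2. apply on_seg_o in H1.
  destruct (on_seg_ex _ _ _ H2) as [t [Ht ->]]. rewrite o_lerp in H1.
  set (R1 := o p q r) in *. set (S1 := o p q s) in *.
  destruct (Rlt_or_le 0 R1).
  - assert (0 < S1) by nra. assert (0 <= (1-t)*R1) by nra. assert (0 <= t*S1) by nra.
    destruct (Rlt_or_le t 1). assert (0 < (1-t)*R1) by nra. lra. assert (0 < t*S1) by nra. lra.
  - assert (R1 <> 0) by (intro E; rewrite E in H; lra). assert (R1 < 0) by lra. assert (S1 < 0) by nra. assert ((1-t)*R1 <= 0) by nra. assert (t*S1 <= 0) by nra.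
    destruct (Rlt_or_le t 1). assert ((1-t)*R1 < 0) by nra. lra. assert (t*S1 < 0) by nra. lra.
Qed.

Lemma NORM a b x y p : (a < 6)%nat -> (x < 6)%nat -> (6 <= b < 12)%nat -> (6 <= y < 12)%nat ->
  ~ (a = x /\ b = y) -> Lcol a (b-6) = Lcol x (y-6) ->
  on_seg p (posU a) (posU b) -> on_seg p (posU x) (posU y) ->
  exists w, (w = a \/ w = b) /\ (w = x \/ w = y) /\ p = posU w.
Proof.
  intros ra rx rb ry ne L H1 H2.
  destruct (Nat.eq_dec a x) as [e|n1].
  - subst x. exists a. split; auto. split; auto.
    apply (SHARE _ (posU b) (posU y)); auto. apply GP; lia.
  - destruct (Nat.eq_dec b y) as [e|n2].
    + subst y. exists b. split; auto. split; auto.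
      apply (SHARE _ (posU a) (posU x)); try apply on_seg_sym; auto. apply GP; lia.
    + exfalso. destruct (SEP_ok a b x y) as [S|S]; auto.
      * apply (SEPL _ _ _ _ p S); auto.
      * apply (SEPL _ _ _ _ p S); auto.
Qed.

Lemma EDGE u v : Kbip_adj 6 6 u v -> exists a b, (a < 6)%nat /\ (6 <= b < 12)%nat /\
  layerU u v = Lcol a (b-6) /\ ((a = u /\ b = v) \/ (a = v /\ b = u)).
Proof.
  unfold Kbip_adj, layerU. intros [[H1 H2]|[H1 H2]].
  - exists u, v. assert (E : (u <? 6)%nat = true) by (apply Nat.ltb_lt; lia). rewrite E.
    repeat split; auto; lia.
  - exists v, u. assert (E : (u <? 6)%nat = false) by (apply Nat.ltb_ge; lia). rewrite E.
    repeat split; auto; lia.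
Qed.

Lemma UPPER : geom_k_layerable (K_bip 6 6) 2.
Proof.
  exists posU, layerU. simpl. split; [|split; [|split]].
  - intros u v ru rv E. destruct (Nat.eq_dec u v) as [|n]; auto. exfalso.
    assert (Hw : exists w, (w < 12 /\ w <> u /\ w <> v)%nat).
    { destruct (Nat.eq_dec u 0); destruct (Nat.eq_dec v 0); destruct (Nat.eq_dec u 1); destruct (Nat.eq_dec v 1);
      first [exists 0%nat; lia | exists 1%nat; lia | exists 2%nat; lia]. }
    destruct Hw as [w [rw [n1 n2]]].
    apply (GP u v w); try lia. rewrite E. unfold o; ring.
  - intros u v w H rw n1 n2 S. apply on_seg_o in S. revert S.
    unfold Kbip_adj in H. apply GP; lia.
  - intros u v H. split.
    + unfold layerU, Lcol. destruct (u <? 6)%nat; apply Nat.mod_upper_bound; lia.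
    + unfold Kbip_adj, layerU in *.
      destruct H as [[H1 H2]|[H1 H2]].
      * assert (E : (u <? 6)%nat = true) by (apply Nat.ltb_lt; lia).
        assert (E' : (v <? 6)%nat = false) by (apply Nat.ltb_ge; lia). rewrite E, E'. auto.
      * assert (E : (u <? 6)%nat = false) by (apply Nat.ltb_ge; lia).
        assert (E' : (v <? 6)%nat = true) by (apply Nat.ltb_lt; lia). rewrite E, E'. auto.
  - intros u v x y H1 H2 nse L p S1 S2.
    destruct (EDGE u v H1) as [a [b [ra [rb [La Ea]]]]].
    destruct (EDGE x y H2) as [x' [y' [rx [ry [Lx Ex]]]]].
    assert (T1 : on_seg p (posU a) (posU b)) by (destruct Ea as [[-> ->]|[-> ->]]; auto; apply on_seg_sym; auto).
    assert (T2 : on_seg p (posU x') (posU y')) by (destruct Ex as [[-> ->]|[-> ->]]; auto; apply on_seg_sym; auto).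
    destruct (NORM a b x' y' p) as [w [W1 [W2 W3]]]; auto.
    + intros [-> ->]. apply nse. unfold same_edge.
      destruct Ea as [[-> ->]|[-> ->]]; destruct Ex as [[? ?]|[? ?]]; subst; auto.
    + congruence.
    + exists w. split; [|split]; auto.
      * destruct Ea as [[-> ->]|[-> ->]]; tauto.
      * destruct Ex as [[-> ->]|[-> ->]]; tauto.
Qed.

Theorem mainTheorem9 : geometric_thickness_is (K_bip 6 6) 2.
Proof.
  split.
  - exact UPPER.
  - intros k' H. destruct k' as [|[|k']].
    + exfalso. destruct H as [pos [layer [_ [_ [LY _]]]]].
      destruct (LY 0%nat 6%nat) as [l _]. simpl; unfold Kbip_adj; lia. lia.
    + exfalso. apply LOWER1; auto.
    + lia.
Qed.
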